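(* Let $\mathcal{C}$ be the set of all finite fields $\mathbb{F}_p$ with $p$ prime, viewed as structures in the language $\{0,1,+\}$. For every non-empty finite subset $\mathcal{C}_0\subseteq\mathcal{C}$ there is a positive existential $\{0,1,+\}$-formula $\varphi(x)$ such that for every $\mathbb{F}_p\in\mathcal{C}_0$ and $x\in\mathbb{F}_p$, $\mathbb{F}_p\models\varphi(x)$ iff $x$ is a square in $\mathbb{F}_p$. However, for no infinite subset $\mathcal{C}_1\subseteq \mathcal{C}$ is there a positive existential $\{0,1,+\}$-formula defining ''$x$ is a square'' simultaneously in all $\mathbb{F}_p\in\mathcal{C}_1$. In particular, there is no positive existential $\{0,1,+\}$-formula $\mu(x,y,w)$ defining the relation $w=xy$ simultaneously in all $\mathbb{F}_p\in\mathcal{C}$. *)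

(* Defs.v *)
From HB Require Import structures.
From mathcomp Require Import all_boot all_algebra.
Set Implicit Arguments. Unset Strict Implicit. Unset Printing Implicit Defensive.
Import GRing.Theory.
Local Open Scope ring_scope.

(* Terms of the language {0, 1, +}; variables are de Bruijn indices. *)
Inductive term : Type :=
| TVar of nat
| TZero
| TOne
| TAdd of term & term.

Inductive pef : Type :=
| PEq of term & term
| PAnd of pef & pef
| POr of pef & pef
| PEx of pef.

Definition scons (R : Type) (a : R) (e : nat -> R) : nat -> R :=
  fun n => match n with O => a | S k => e k end.

Fixpoint teval (R : nzRingType) (e : nat -> R) (t : term) : R :=
  match t with
  | TVar n => e n
  | TZero => 0
  | TOne => 1
  | TAdd t1 t2 => teval e t1 + teval e t2
  end.

(* Satisfaction; PEx binds variable 0 and shifts the others. *)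
Fixpoint sat (R : nzRingType) (e : nat -> R) (f : pef) : Prop :=
  match f with
  | PEq t1 t2 => teval e t1 = teval e t2
  | PAnd f1 f2 => sat e f1 /\ sat e f2
  | POr f1 f2 => sat e f1 \/ sat e f2
  | PEx f1 => exists a : R, sat (scons a e) f1
  end.

Definition is_square (R : nzRingType) (x : R) : Prop := exists y : R, x = y * y.

Definition defines_square (R : nzRingType) (phi : pef) : Prop :=
  forall e : nat -> R, sat e phi <-> is_square (e 0%N).

Definition defines_mul (R : nzRingType) (mu : pef) : Prop :=
  forall e : nat -> R, sat e mu <-> e 2%N = e 0%N * e 1%N.

(* Main.v *)
Require Import Defs.
From mathcomp Require Import all_boot all_algebra.
From mathcomp Require Import ring zify.
From Stdlib Require Import FunctionalExtensionality ClassicalEpsilon.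
Set Implicit Arguments. Unset Strict Implicit. Unset Printing Implicit Defensive.
Import GRing.Theory.
Local Open Scope ring_scope.

Definition aff (R : nzRingType) (A : (nat -> R) -> Prop) :=
  forall a b c, A a -> A b -> A c -> A (fun n => a n - b n + c n).

Fixpoint nd (f : pef) : nat :=
  match f with
  | PEq _ _ => 1
  | PAnd f1 f2 => nd f1 * nd f2
  | POr f1 f2 => nd f1 + nd f2
  | PEx f1 => nd f1
  end%N.

Lemma nd_gt0 f : (0 < nd f)%N.
Proof. elim: f => //= f1 H1 f2 H2; [by rewrite muln_gt0 H1 H2 | by rewrite addn_gt0 H1]. Qed.

Lemma teval_aff (R : comNzRingType) (a b c : nat -> R) t :
  teval (fun n => a n - b n + c n) t = teval a t - teval b t + teval c t.
Proof.
elim: t => //= [|| t1 -> t2 ->]; ring.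
Qed.

Lemma decomp (R : comNzRingType) (f : pef) :
  exists A : nat -> (nat -> R) -> Prop, (forall i, aff (A i)) /\
    forall e, sat e f <-> exists i, (i < nd f)%N /\ A i e.
Proof.
elim: f => [t1 t2 | f1 [A1 [HA1 E1]] f2 [A2 [HA2 E2]] | f1 [A1 [HA1 E1]] f2 [A2 [HA2 E2]] | f1 [A1 [HA1 E1]]] /=.
- exists (fun _ e => teval e t1 = teval e t2); split.
    by move=> _ a b c /= Ha Hb Hc; rewrite !teval_aff Ha Hb Hc.
  by move=> e; split; [move=> H; exists 0%N | case=> ? []].
- have n2 := nd_gt0 f2.
  exists (fun i e => A1 (i %/ nd f2)%N e /\ A2 (i %% nd f2)%N e); split.
    by move=> i a b c [? ?] [? ?] [? ?]; split; [apply: HA1|apply: HA2].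
  move=> e; rewrite E1 E2; split.
    move=> [[i1 [Hi1 H1]] [i2 [Hi2 H2]]]; exists (i1 * nd f2 + i2)%N.
    rewrite divnMDl // modnMDl (divn_small Hi2) addn0 (modn_small Hi2); split=> //.
    by apply: (@leq_trans ((i1.+1) * nd f2)); [rewrite mulSn addnC ltn_add2r | rewrite leq_mul2r Hi1 orbT].
  move=> [i [Hi [H1 H2]]]; split.
    by exists (i %/ nd f2)%N; split=> //; rewrite ltn_divLR.
  by exists (i %% nd f2)%N; split=> //; rewrite ltn_pmod.
- exists (fun i e => if (i < nd f1)%N then A1 i e else A2 (i - nd f1)%N e); split.
    by move=> i a b c; case: ifP => _; [apply: HA1|apply: HA2].
  move=> e; rewrite E1 E2; split.
    case=> [[i [Hi H]]|[i [Hi H]]]; first by exists i; rewrite Hi ltn_addr.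
    exists (nd f1 + i)%N; rewrite ltn_add2l Hi ltnNge leq_addr /= addKn; done.
  move=> [i [Hi]]; case: ifP => Hl H; first by left; exists i.
  right; exists (i - nd f1)%N; split=> //; rewrite ltn_subLR //; last by rewrite leqNgt Hl.
- exists (fun i e => exists a, A1 i (scons a e)); split.
    move=> i a b c [x Ha] [y Hb] [z Hc]; exists (x - y + z).
    have -> : scons (x - y + z) (fun n => a n - b n + c n) =
      (fun n => scons x a n - scons y b n + scons z c n).
      by apply: functional_extensionality; case.
    exact: HA1.
  move=> e; split.
    by move=> [a /E1 [i [Hi H]]]; exists i; split=> //; exists a.
  by move=> [i [Hi [a H]]]; exists a; apply/E1; exists i.
Qed.

Fixpoint tnum (n : nat) : term :=
  match n with O => TZero | S k => TAdd (tnum k) TOne end.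

Lemma teval_tnum (R : nzRingType) (e : nat -> R) n : teval e (tnum n) = n%:R.
Proof. by elim: n => //= n ->; rewrite -mulrSr. Qed.

Definition pfalse := PEq TOne TZero.

Lemma sat_pfalse (R : nzRingType) (e : nat -> R) : ~ sat e pfalse.
Proof. by move=> /= /eqP; rewrite oner_eq0. Qed.

Lemma sat_bigor (R : nzRingType) (e : nat -> R) (g : nat -> pef) (s : seq nat) :
  sat e (foldr POr pfalse (map g s)) <-> exists x, x \in s /\ sat e (g x).
Proof.
elim: s => [|y s IH] /=; first by split=> [/sat_pfalse|[x []]].
rewrite IH; split.
  by case=> [H|[x [Hx H]]]; [exists y; rewrite mem_head | exists x; rewrite in_cons Hx orbT].
move=> [x []]; rewrite in_cons => /orP [/eqP -> H|Hx H]; first by left.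
by right; exists x.
Qed.

Definition sqset p := foldr POr pfalse (map (fun k => PEq (TVar 0) (tnum (k * k))) (iota 0 p)).

Definition phi1 (C0 : seq nat) :=
  foldr POr pfalse (map (fun q => PAnd (PEq (tnum q) TZero) (sqset q)) C0).

Lemma Fp_natK p (pp : prime p) (y : 'F_p) : (nat_of_ord y)%:R = y.
Proof.
have yp : (nat_of_ord y < p)%N.
  have := ltn_ord y; move: (nat_of_ord y) => m; by rewrite Fp_cast.
by apply: val_inj; rewrite /= val_Fp_nat // modn_small.
Qed.

Lemma part1 (C0 : seq nat) : all prime C0 ->
  forall p, p \in C0 -> defines_square 'F_p (phi1 C0).
Proof.
move=> /allP Hall p Hp e; have pp := Hall p Hp.
rewrite /phi1 sat_bigor; split.
  move=> [q [Hq /= []]]; rewrite !teval_tnum => Hq0.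
  have : (p %| q)%N by rewrite (dvdn_pcharf (pchar_Fp pp)) Hq0.
  rewrite (dvdn_prime2 pp (Hall q Hq)) => /eqP <-.
  rewrite /sqset sat_bigor => [[k [_ /=]]]; rewrite teval_tnum natrM => ->.
  by exists k%:R.
move=> [y Hy]; exists p; split=> //=; split; first by rewrite teval_tnum pchar_Fp_0.
have yp : (nat_of_ord y < p)%N.
  have := ltn_ord y; move: (nat_of_ord y) => m; by rewrite Fp_cast.
rewrite /sqset sat_bigor; exists (nat_of_ord y); split.
  by rewrite mem_iota add0n.
by rewrite /= teval_tnum natrM Hy (Fp_natK pp).
Qed.

Lemma pigeon (N : nat) (P : nat -> nat -> Prop) :
  (forall k, (k <= N)%N -> exists i, (i < N)%N /\ P k i) ->
  exists k1 k2 i : nat, (i < N)%N /\ k1 != k2 /\ P k1 i /\ P k2 i.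
Proof.
move=> H.
have H' : forall k : 'I_N.+1, exists i : 'I_N, P k i.
  move=> k; have [i [Hi Pi]] := H k (ltn_ord k).
  by exists (Ordinal Hi).
pose f := fun k => proj1_sig (constructive_indefinite_description _ (H' k)).
have Pf : forall k : 'I_N.+1, P k (f k) := fun k => proj2_sig (constructive_indefinite_description _ (H' k)).
case: (boolP (injectiveb f)) => [/injectiveP inj | /injectivePn [x [y nxy exy]]].
  by have := leq_card f inj; rewrite !card_ord ltnn.
exists (nat_of_ord x), (nat_of_ord y), (nat_of_ord (f x)); split; first exact: ltn_ord.
split; first by [].
by split; [exact: Pf | rewrite exy; exact: Pf].
Qed.

Lemma natFp_inj p (pp : prime p) k1 k2 : (k1 < p)%N -> (k2 < p)%N ->
  k1%:R = k2%:R :> 'F_p -> k1 = k2.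
Proof.
move=> h1 h2 E; have := congr1 (@nat_of_ord _) E.
by rewrite !val_Fp_nat // !modn_small.
Qed.

Lemma two_neq0 p (pp : prime p) : (2 < p)%N -> 2%:R != 0 :> 'F_p.
Proof.
move=> h; rewrite -(dvdn_pcharf (pchar_Fp pp)).
by apply/negP => /(@dvdn_leq _ 2 erefl); rewrite leqNgt h.
Qed.

Lemma sq_inj p (pp : prime p) k1 k2 : (k1 + k2 < p)%N ->
  (k1 * k1)%:R = (k2 * k2)%:R :> 'F_p -> k1 = k2.
Proof.
move=> h; rewrite !natrM => /eqP; rewrite -!expr2 eqf_sqr => /orP [/eqP|/eqP E].
  by apply: natFp_inj => //; apply: leq_ltn_trans h; rewrite ?leq_addr ?leq_addl.
have : (k1 + k2)%:R = 0 :> 'F_p by rewrite natrD E addNr.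
move=> /(congr1 (@nat_of_ord _)); rewrite val_Fp_nat // modn_small //= => /eqP.
by rewrite addn_eq0 => /andP [/eqP -> /eqP ->].
Qed.

Lemma nonsq p (pp : prime p) : (2 < p)%N -> ~ (forall z : 'F_p, is_square z).
Proof.
move=> h H.
pose f := fun z : 'F_p => z * z.
have inj : {in predT &, injective f}.
  apply/image_injP; rewrite eqn_leq leq_image_card /=.
  apply: subset_leq_card; apply/subsetP => z _.
  have [y ->] := H z; apply/imageP; by exists y.
have : f 1 = f (-1) by rewrite /f mulrNN.
move=> /inj; rewrite !inE => /(_ isT isT) /eqP.
rewrite -subr_eq0 opprK -mulr2n => /eqP.
by apply/eqP; exact: two_neq0.
Qed.

Lemma line (R : comNzRingType) (A : (nat -> R) -> Prop) x y : aff A ->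
  A (fun _ => x) -> A (fun _ => y) -> forall m : nat, A (fun _ => x + m%:R * (y - x)).
Proof.
move=> HA Hx Hy; elim=> [|m IH]; first by rewrite mul0r addr0.
have -> : x + m.+1%:R * (y - x) = (x + m%:R * (y - x)) - x + y.
  by rewrite mulrSr; ring.
exact: HA.
Qed.

Lemma part2 (C1 : nat -> Prop) : (forall p, C1 p -> prime p) ->
  (forall n : nat, exists p, (n < p)%N /\ C1 p) ->
  ~ exists phi : pef, forall p : nat, C1 p -> defines_square 'F_p phi.
Proof.
move=> HC Hinf [phi Hphi].
have [p [Hp Cp]] := Hinf (2 * nd phi + 2)%N.
have pp := HC p Cp.
have [A [HA E]] := decomp 'F_p phi.
have Hk : forall k, (k <= nd phi)%N -> exists i, (i < nd phi)%N /\
    ((k <= nd phi)%N /\ A i (fun _ => (k * k)%:R : 'F_p)).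
  move=> k hk; have : sat (fun _ => (k * k)%:R : 'F_p) phi.
    apply/(Hphi p Cp); exists k%:R; by rewrite natrM.
  by move=> /E [i [Hi HAi]]; exists i.
have [k1 [k2 [i [iN [nk [[b1 H1] [b2 H2]]]]]]] := pigeon Hk.
set x : 'F_p := (k1 * k1)%:R in H1; set y : 'F_p := (k2 * k2)%:R in H2.
have nxy : y - x != 0.
  rewrite subr_eq0; apply/eqP => /esym /sq_inj -/(_ pp) Heq.
  by move/eqP: nk; apply; apply: Heq; apply: leq_trans Hp; lia.
apply: (nonsq pp); first lia.
move=> z; apply/(Hphi p Cp (fun _ => z)); apply/E; exists i; split.
  by [].
have := line (HA i) H1 H2 (nat_of_ord ((z - x) / (y - x))).
by rewrite (Fp_natK pp) divfK // addrC subrK.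
Qed.

Lemma part3 : ~ exists mu : pef, forall p : nat, prime p -> defines_mul 'F_p mu.
Proof.
move=> [mu Hmu].
have [p Hp pp] := prime_above (2 * nd mu + 2)%N.
have [A [HA E]] := decomp 'F_p mu.
pose ek (k : nat) : nat -> 'F_p := fun n => if n == 2%N then k%:R * k%:R else k%:R.
have Hk : forall k, (k <= nd mu)%N -> exists i, (i < nd mu)%N /\
    ((k <= nd mu)%N /\ A i (ek k)).
  move=> k hk; have : sat (ek k) mu by apply/(Hmu p pp).
  by move=> /E [i [Hi HAi]]; exists i.
have [k1 [k2 [i [iN [nk [[b1 H1] [b2 H2]]]]]]] := pigeon Hk.
have Hs : sat (fun n => ek k2 n - ek k1 n + ek k2 n) mu.
  by apply/E; exists i; split => //; exact: HA.
move: Hs => /(Hmu p pp); rewrite /ek /=.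
set x : 'F_p := k1%:R; set y : 'F_p := k2%:R => H.
have nxy : y - x != 0.
  rewrite subr_eq0; apply/eqP => /esym /natFp_inj -/(_ pp) Heq.
  by move/eqP: nk; apply; apply: Heq; lia.
have : 2%:R * ((y - x) * (y - x)) = 0.
  have -> : 2%:R * ((y - x) * (y - x)) =
     (y - x + y) * (y - x + y) - (y * y - x * x + y * y) by ring.
  by rewrite H subrr.
by move/eqP; rewrite !mulf_eq0 (negbTE (two_neq0 pp _)) ?(negbTE nxy) //; lia.
Qed.

Theorem proposition1p5 :
  (forall C0 : seq nat, C0 != [::] -> all prime C0 ->
     exists phi : pef, forall p : nat, p \in C0 -> defines_square 'F_p phi)
  /\
  (forall C1 : nat -> Prop, (forall p, C1 p -> prime p) ->
     (forall n : nat, exists p, (n < p)%N /\ C1 p) ->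
     ~ exists phi : pef, forall p : nat, C1 p -> defines_square 'F_p phi)
  /\
  ~ exists mu : pef, forall p : nat, prime p -> defines_mul 'F_p mu.
Proof.
split; first by move=> C0 _ H; exists (phi1 C0); exact: part1.
split; [exact: part2 | exact: part3].
Qed.
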